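(* Let $\phi$ be an escort, let $\Delta^{n}_{\circ}=\{x\in\mathbb{R}^n : x_i>0,\ \sum_i x_i=1\}$ be the interior of the probability simplex, and equip $\Delta^n_\circ$ with the escort metric $g^{\phi}_{ij}(x)=\frac{1}{\phi(x_i)}\delta_{ij}$, i.e. $\langle u,w\rangle_x=\sum_{i}\frac{1}{\phi(x_i)}u_iw_i$ for tangent vectors $u,w$ (vectors with $\sum_i u_i=\sum_i w_i=0$). Let $V$ be a $C^1$ function on an open neighbourhood of $\Delta^n_\circ$ in $\mathbb{R}^n$ and let $f=\nabla V$ be its Euclidean gradient. Define $\hat f_{\phi}(x)$ by \[\hat f_{\phi,i}(x)=\phi(x_i)\left(f_i(x)-\mathbb{E}^{\phi}_{x}[f(x)]\right),\qquad i=1,\dots,n.\] Then $\hat f_\phi$ is the gradient of $V|_{\Delta^n_\circ}$ with respect to the escort metric: for every $x\in\Delta^n_\circ$, $\hat f_\phi(x)$ is a tangent vector (i.e. $\sum_i \hat f_{\phi,i}(x)=0$) and $\langle \hat f_\phi(x), z\rangle_x = D_xV(z)$ for every $z\in\mathbb{R}^n$ with $\sum_i z_i=0$.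
   Context: An escort is a continuous function $\phi$ that is strictly positive on $(0,1]$. For $x=(x_1,\dots,x_n)$ the partition function is $Z_\phi(x)=\sum_{i=1}^n\phi(x_i)$, and for a vector $f\in\mathbb{R}^n$ the escort expectation is $\mathbb{E}^{\phi}_{x}[f]=\frac{1}{Z_\phi(x)}\sum_{i=1}^n\phi(x_i)f_i$. *)

(* Defs.v *)
From HB Require Import structures.
From mathcomp Require Import all_boot all_order all_algebra.
From mathcomp Require Import all_classical all_reals all_analysis.
Set Implicit Arguments. Unset Strict Implicit. Unset Printing Implicit Defensive.
Import Order.TTheory GRing.Theory Num.Theory.
Import numFieldNormedType.Exports.
Local Open Scope classical_set_scope.
Local Open Scope ring_scope.

Definition escort (R : realType) (phi : R -> R) : Prop :=
  {within `[0, 1]%classic, continuous phi} /\ (forall t : R, 0 < t <= 1 -> 0 < phi t).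

Definition Zphi (R : realType) (n : nat) (phi : R -> R) (x : 'rV[R]_n) : R :=
  \sum_(i < n) phi (x 0 i).

Definition escortE (R : realType) (n : nat) (phi : R -> R) (x f : 'rV[R]_n) : R :=
  (Zphi phi x)^-1 * \sum_(i < n) phi (x 0 i) * f 0 i.

Definition simplex_int (R : realType) (n : nat) : set 'rV[R]_n :=
  [set x | (forall i, 0 < x 0 i) /\ \sum_(i < n) x 0 i = 1].

Definition tangent (R : realType) (n : nat) (u : 'rV[R]_n) : Prop :=
  \sum_(i < n) u 0 i = 0.

Definition escort_inner (R : realType) (n : nat) (phi : R -> R) (x u w : 'rV[R]_n) : R :=
  \sum_(i < n) (phi (x 0 i))^-1 * u 0 i * w 0 i.

Definition egrad (R : realType) (n : nat) (V : 'rV[R]_n -> R) (x : 'rV[R]_n) : 'rV[R]_n :=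
  \row_(i < n) ('d V x (delta_mx 0 i : 'rV[R]_n) : R).

Definition fhat (R : realType) (n : nat) (phi : R -> R) (f : 'rV[R]_n -> 'rV[R]_n)
  (x : 'rV[R]_n) : 'rV[R]_n :=
  \row_(i < n) (phi (x 0 i) * (f x 0 i - escortE phi x (f x))).

Definition C1_on (R : realType) (n : nat) (U : set 'rV[R]_n) (V : 'rV[R]_n -> R) : Prop :=
  (forall x, U x -> differentiable V x) /\
  (forall i : 'I_n, {within U, continuous (fun x => ('d V x (delta_mx 0 i : 'rV[R]_n) : R))}).

(* Main.v *)
Require Import Defs.
From HB Require Import structures.
From mathcomp Require Import all_boot all_order all_algebra.
From mathcomp Require Import all_classical all_reals all_analysis.
Import Order.TTheory GRing.Theory Num.Theory.
Import numFieldNormedType.Exports.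
Local Open Scope classical_set_scope.
Local Open Scope ring_scope.

Theorem mainTheorem1 (R : realType) (n : nat) (phi : R -> R)
  (U : set 'rV[R]_n) (V : 'rV[R]_n -> R) :
  escort phi ->
  open U -> @simplex_int R n `<=` U ->
  C1_on U V ->
  forall x : 'rV[R]_n, @simplex_int R n x ->
    tangent (fhat phi (egrad V) x) /\
    (forall z : 'rV[R]_n, tangent z ->
       escort_inner phi x (fhat phi (egrad V) x) z = ('d V x z : R)).
Proof.
move=> [_ phipos] _ _ _ x [xpos xsum].
have xle1 : forall i, x 0 i <= 1.
  move=> i; rewrite -xsum (bigD1 i) //= lerDl.
  by apply: sumr_ge0 => j _; apply: ltW.
have php : forall i, 0 < phi (x 0 i) by move=> i; apply: phipos; rewrite xpos xle1.
have Zne : Zphi phi x != 0.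
  have [i0 _] : exists i0 : 'I_n, true.
    case: n x xpos xsum xle1 php {U V} => [|m] x _ xsum _ _.
      by move: xsum; rewrite big_ord0 => /eqP; rewrite eq_sym oner_eq0.
    by exists ord0.
  rewrite /Zphi lt0r_neq0 // (bigD1 i0) //=; apply: ltr_pwDl; first exact: php.
  by apply: sumr_ge0 => j _; apply: ltW.
split.
  rewrite /tangent /fhat.
  under eq_bigr => i _ do rewrite mxE mulrBr.
  rewrite sumrB /escortE -mulr_suml.
  rewrite [X in X * _](_ : _ = Zphi phi x) // mulrA mulfV // mul1r.
  by rewrite subrr.
move=> z zt.
rewrite {2}(row_sum_delta z) linear_sum /escort_inner /fhat.
under eq_bigr => i _ do rewrite !mxE mulrA mulVf ?lt0r_neq0 // mul1r mulrBl.
rewrite sumrB -mulr_sumr zt mulr0 subr0.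
apply: eq_bigr => i _.
by rewrite linearZ /= mulrC.
Qed.
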